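(* Let $\mathbf k$ be a field which is finite or algebraically closed, $V$ a finite-dimensional $\mathbf k$-vector space with a nondegenerate quadratic form $Q$, and $X^*$ a $Q$-filtration of $V$. Then $\{1+N:N\in E^{\ge2}X^*\}\subset SO_Q$.
   Context: $\langle x,y\rangle=Q(x+y)-Q(x)-Q(y)$, $R$ its radical; $Q$ is nondegenerate if $Q|_R$ is injective. $W^\perp=\{x:\langle x,W\rangle=0\}$. $O_Q=\{T\in GL(V):Q(Tx)=Q(x)\ \forall x\}$; if $\mathbf k$ is algebraically closed $SO_Q$ is the identity component of $O_Q$, if $\mathbf k$ is finite $SO_Q=O_Q\cap SO_{\tilde Q}$ with $\tilde Q$ the extension of $Q$ to an algebraic closure. $\tilde{\mathcal M}_Q$ is the set of nilpotent $N\in\mathrm{End}(V)$ with $Q(Nx)=-\langle x,Nx\rangle$ for all $x$. A $Q$-filtration is a decreasing family $(X^{\ge a})_{a\in\mathbb Z}$ of subspaces, $0$ for $a\gg0$, $V$ for $a\ll0$, with $Q|_{X^{\ge a}}=0$ and $X^{\ge1-a}=(X^{\ge a})^\perp$ for $a\ge1$. $E^{\ge2}X^*=\{N\in\tilde{\mathcal M}_Q:NX^{\ge a}\subset X^{\ge a+2}\ \forall a\}$. *)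

(* Defs.v *)
From HB Require Import structures.
From mathcomp Require Import all_boot all_order all_algebra.
Set Implicit Arguments. Unset Strict Implicit. Unset Printing Implicit Defensive.
Import Order.TTheory GRing.Theory.
Local Open Scope ring_scope.

(* V is modelled as k^n = 'rV[k]_n; endomorphisms act on the right: x *m T. *)

Section Defs.
Variables (k : fieldType) (n : nat).
Implicit Types (Q : 'rV[k]_n -> k) (x y z : 'rV[k]_n) (T N : 'M[k]_n).

Definition polar Q x y : k := Q (x + y) - Q x - Q y.

Definition is_quadratic_form Q : Prop :=
  [/\ forall (a : k) x, Q (a *: x) = a ^+ 2 * Q x,
      forall x y z, polar Q (x + y) z = polar Q x z + polar Q y z
    & forall (a : k) x y, polar Q (a *: x) y = a * polar Q x y].

Definition in_radical Q x : Prop := forall y, polar Q x y = 0.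

Definition Q_nondegenerate Q : Prop :=
  forall x y, in_radical Q x -> in_radical Q y -> Q x = Q y -> x = y.

Definition Q_filtration Q (X : int -> {vspace 'rV[k]_n}) : Prop :=
  [/\ forall a : int, (X (a + 1)%R <= X a)%VS,
      exists a0 : int, forall a, a0 <= a -> X a = 0%VS,
      exists a1 : int, forall a, a <= a1 -> X a = fullv,
      forall a : int, 1 <= a -> forall x, x \in X a -> Q x = 0
    & forall a : int, 1 <= a ->
        forall x, x \in X (1 - a) <-> (forall w, w \in X a -> polar Q x w = 0)].

Definition nilpotent_mx N : Prop := exists m : nat, N ^+ m = 0.

Definition tildeM Q N : Prop :=
  nilpotent_mx N /\ forall x, Q (x *m N) = - polar Q x (x *m N).

Definition E2 Q (X : int -> {vspace 'rV[k]_n}) N : Prop :=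
  tildeM Q N /\ forall (a : int) x, x \in X a -> x *m N \in X (a + 2).

Definition Ogroup Q T : Prop := T \in unitmx /\ forall x, Q (x *m T) = Q x.

Inductive polyfun : ('M[k]_n -> k) -> Prop :=
| pf_const (c : k) : polyfun (fun _ => c)
| pf_coord (i j : 'I_n) : polyfun (fun A => A i j)
| pf_add f g : polyfun f -> polyfun g -> polyfun (fun A => f A + g A)
| pf_mul f g : polyfun f -> polyfun g -> polyfun (fun A => f A * g A).

Definition Zclosed (Z : 'M[k]_n -> Prop) : Prop :=
  exists S : ('M[k]_n -> k) -> Prop,
    (forall f, S f -> polyfun f) /\ (forall A, Z A <-> forall f, S f -> f A = 0).

Definition Zconnected (C : 'M[k]_n -> Prop) : Prop :=
  forall Z1 Z2, Zclosed Z1 -> Zclosed Z2 ->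
    (forall A, C A -> Z1 A \/ Z2 A) ->
    (forall A, C A -> Z1 A -> Z2 A -> False) ->
    (forall A, C A -> Z1 A) \/ (forall A, C A -> Z2 A).

Definition identity_component (G : 'M[k]_n -> Prop) (T : 'M[k]_n) : Prop :=
  exists C : 'M[k]_n -> Prop,
    [/\ forall A, C A -> G A, C 1%:M, Zconnected C & C T].

End Defs.

(* extension of Q to L^n along iota : k -> L (the unique quadratic form on
   L^n agreeing with Q on k^n) *)
Definition Qext (k : fieldType) (L : fieldType) (iota : {rmorphism k -> L}) (n : nat)
  (Q : 'rV[k]_n -> k) (x : 'rV[L]_n) : L :=
  \sum_(i < n) x 0 i ^+ 2 * iota (Q (delta_mx 0 i))
  + \sum_(i < n) \sum_(j < n | (i < j)%N)
      x 0 i * x 0 j * iota (polar Q (delta_mx 0 i) (delta_mx 0 j)).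

Definition finite_field (k : fieldType) : Prop := exists s : seq k, forall x : k, x \in s.

Definition is_alg_closure (k L : fieldType) (iota : {rmorphism k -> L}) : Prop :=
  GRing.closed_field_axiom L /\
  forall y : L, exists p : {poly k}, p != 0 /\ root (map_poly iota p) y.

(* SO_Q: identity component of O_Q if k is algebraically closed;
   O_Q ∩ SO_{Qtilde} if k is finite. *)
Definition SO_Q (k : fieldType) (n : nat) (Q : 'rV[k]_n -> k) (T : 'M[k]_n) : Prop :=
  (GRing.closed_field_axiom k -> identity_component (Ogroup Q) T) /\
  (finite_field k ->
     Ogroup Q T /\
     forall (L : fieldType) (iota : {rmorphism k -> L}), is_alg_closure iota ->
       identity_component (Ogroup (Qext iota Q)) (map_mx iota T)).

(* Main.v *)
Require Import Defs.
From HB Require Import structures.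
From mathcomp Require Import all_boot all_order all_algebra.
From mathcomp Require Import ring zify.
From Stdlib Require Import Classical.
Set Implicit Arguments. Unset Strict Implicit. Unset Printing Implicit Defensive.
Import Order.TTheory GRing.Theory Num.Theory.
Local Open Scope ring_scope.
Definition bil (R : comPzRingType) n (M : 'M[R]_n) (x y : 'rV[R]_n) : R := (x *m M *m y^T) 0 0.

Section Bil.
Variables (R : comPzRingType) (n : nat) (M : 'M[R]_n).
Lemma bilDl x y z : bil M (x + y) z = bil M x z + bil M y z.
Proof. by rewrite /bil !mulmxDl mxE. Qed.
Lemma bilDr x y z : bil M z (x + y) = bil M z x + bil M z y.
Proof. by rewrite /bil linearD /= mulmxDr mxE. Qed.
Lemma bilZl a x y : bil M (a *: x) y = a * bil M x y.
Proof. by rewrite /bil -!scalemxAl mxE. Qed.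
Lemma bilZr a x y : bil M x (a *: y) = a * bil M x y.
Proof. by rewrite /bil linearZ /= -scalemxAr mxE. Qed.
Lemma bil0l y : bil M 0 y = 0.
Proof. by rewrite /bil !mul0mx mxE. Qed.
Lemma bil0r y : bil M y 0 = 0.
Proof. by rewrite /bil linear0 mulmx0 mxE. Qed.
Lemma bil_suml I (r : seq I) P (F : I -> 'rV_n) y :
  bil M (\sum_(i <- r | P i) F i) y = \sum_(i <- r | P i) bil M (F i) y.
Proof. by apply: (big_morph (fun x => bil M x y)); [move=> a b; exact: bilDl|exact: bil0l]. Qed.
Lemma bil_sumr I (r : seq I) P (F : I -> 'rV_n) y :
  bil M y (\sum_(i <- r | P i) F i) = \sum_(i <- r | P i) bil M y (F i).
Proof. by apply: (big_morph (fun x => bil M y x)); [move=> a b; exact: bilDr|exact: bil0r]. Qed.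
Lemma bilT x y : bil M^T x y = bil M y x.
Proof.
have h (A : 'M[R]_1) : A 0 0 = A^T 0 0 by rewrite mxE.
by rewrite /bil [RHS]h !trmx_mul trmxK mulmxA.
Qed.
Lemma bil_entry m p (X : 'M_(m, n)) (Y : 'M_(p, n)) i j :
  (X *m M *m Y^T) i j = bil M (row i X) (row j Y).
Proof.
rewrite /bil -!row_mul !mxE; apply: eq_bigr => l _; by rewrite !mxE.
Qed.
Lemma bil_delta i j : bil M 'e_i 'e_j = M i j.
Proof.
rewrite /bil -rowE trmx_delta -colE !mxE //.
Qed.
Lemma bilM x y (P : 'M_n) : bil M (x *m P) y = bil (P *m M) x y.
Proof. by rewrite /bil !mulmxA. Qed.
Lemma bilMr x y (P : 'M_n) : bil M x (y *m P) = bil (M *m P^T) x y.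
Proof. by rewrite /bil trmx_mul !mulmxA. Qed.
End Bil.

Section QF.
Variables (k : fieldType) (n : nat) (Q : 'rV[k]_n -> k).
Hypothesis hq : is_quadratic_form Q.

Lemma QZ a x : Q (a *: x) = a ^+ 2 * Q x. Proof. by case: hq. Qed.
Lemma polarDl x y z : polar Q (x + y) z = polar Q x z + polar Q y z. Proof. by case: hq. Qed.
Lemma polarZl a x y : polar Q (a *: x) y = a * polar Q x y. Proof. by case: hq. Qed.
Lemma polarC x y : polar Q x y = polar Q y x.
Proof. by rewrite /polar [y + x]addrC addrAC. Qed.
Lemma polarDr x y z : polar Q z (x + y) = polar Q z x + polar Q z y.
Proof. by rewrite !(polarC z) polarDl. Qed.
Lemma polarZr a x y : polar Q x (a *: y) = a * polar Q x y.
Proof. by rewrite !(polarC x) polarZl. Qed.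
Lemma Q0 : Q 0 = 0.
Proof. by rewrite -(scale0r 0) QZ expr2 !mul0r. Qed.
Lemma polar0l y : polar Q 0 y = 0.
Proof. by rewrite -(scale0r 0) polarZl mul0r. Qed.
Lemma polar0r y : polar Q y 0 = 0.
Proof. by rewrite polarC polar0l. Qed.
Lemma polar_suml I (r : seq I) P (F : I -> 'rV_n) y :
  polar Q (\sum_(i <- r | P i) F i) y = \sum_(i <- r | P i) polar Q (F i) y.
Proof. by apply: (big_morph (fun x => polar Q x y)); [move=> a b; exact: polarDl|exact: polar0l]. Qed.
Lemma polar_sumr I (r : seq I) P (F : I -> 'rV_n) y :
  polar Q y (\sum_(i <- r | P i) F i) = \sum_(i <- r | P i) polar Q y (F i).
Proof. by apply: (big_morph (fun x => polar Q y x)); [move=> a b; exact: polarDr|exact: polar0r]. Qed.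
Lemma QD x y : Q (x + y) = Q x + Q y + polar Q x y.
Proof. by rewrite /polar (addrC (Q x + Q y)) -[Q (x + y) - Q x - Q y]addrA -opprD subrK. Qed.
Lemma polarNl x y : polar Q (- x) y = - polar Q x y.
Proof. by rewrite -scaleN1r polarZl mulN1r. Qed.
Lemma polarNr x y : polar Q y (- x) = - polar Q y x.
Proof. by rewrite -scaleN1r polarZr mulN1r. Qed.
Lemma polarBl x y z : polar Q (x - y) z = polar Q x z - polar Q y z.
Proof. by rewrite polarDl polarNl. Qed.
Lemma polarBr x y z : polar Q z (x - y) = polar Q z x - polar Q z y.
Proof. by rewrite polarDr polarNr. Qed.
Lemma QN x : Q (- x) = Q x.
Proof. by rewrite -scaleN1r QZ sqrrN expr1n mul1r. Qed.

Definition Amat : 'M[k]_n := \matrix_(i, j)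
  (if i == j then Q 'e_i else if (i < j)%N then polar Q 'e_i 'e_j else 0).
Definition Gmat := Amat + Amat^T.

Lemma polar_delta i j : polar Q 'e_i 'e_j = Gmat i j.
Proof.
rewrite /Gmat !mxE eq_sym.
case: (ltngtP i j) => [lij|lji|eij].
- have -> : (j == i) = false by apply/eqP => h; move: lij; rewrite h ltnn.
  by rewrite addr0.
- have -> : (j == i) = false by apply/eqP => h; move: lji; rewrite h ltnn.
  by rewrite add0r polarC.
- have e : i = j by apply: val_inj.
  subst j; rewrite eqxx /polar -{1 2}(scale1r 'e_i) -scalerDl QZ.
  rewrite (_ : (1 + 1) ^+ 2 = 1 + 1 + 1 + 1 :> k); last first.
    by rewrite expr2 mulrDl mul1r addrA.
  by rewrite !mulrDl !mul1r addrK addrK.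
Qed.

Lemma polar_bil x y : polar Q x y = bil Gmat x y.
Proof.
rewrite [x]row_sum_delta [y]row_sum_delta polar_suml bil_suml.
apply: eq_bigr => i _; rewrite polarZl bilZl polar_sumr bil_sumr; congr (_ * _).
apply: eq_bigr => j _; by rewrite polarZr bilZr polar_delta bil_delta.
Qed.

Lemma Q_bil x : Q x = bil Amat x x.
Proof.
pose D x := Q x - bil Amat x x.
have DD u v : D (u + v) = D u + D v.
  rewrite /D QD polar_bil /Gmat.
  have -> : bil (Amat + Amat^T) u v = bil Amat u v + bil Amat v u.
    by rewrite /bil mulmxDr mulmxDl mxE -/(bil _ u v) -/(bil _ u v) bilT.
  rewrite !bilDl !bilDr; ring.
have D0 : D 0 = 0 by rewrite /D Q0 bil0l subrr.
have Dsum : D x = \sum_(j < n) D (x 0 j *: 'e_j).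
  rewrite {1}[x]row_sum_delta. by apply: (big_morph D DD D0).
suff : D x = 0 by move/eqP; rewrite subr_eq0 => /eqP.
rewrite Dsum big1 // => j _.
by rewrite /D QZ bilZl bilZr bil_delta mxE eqxx expr2 mulrA subrr.
Qed.
End QF.
Section Filt.
Variables (k : fieldType) (n : nat) (Q : 'rV[k]_n -> k) (X : int -> {vspace 'rV[k]_n}).
Hypothesis hq : is_quadratic_form Q.
Hypothesis hX : Q_filtration Q X.

Lemma Xmono a b : a <= b -> (X b <= X a)%VS.
Proof.
move=> ab; have [d ->] : exists d : nat, b = a + d%:Z.
  exists `|b - a|%N; rewrite gez0_abs ?subr_ge0 //; lia.
elim: d => [|d IH]; first by rewrite addr0 subvv.
apply: subv_trans IH; case: hX => h _ _ _ _.
by rewrite -(addn1 d) PoszD addrA; apply: h.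
Qed.

Lemma Xiso c x : 1 <= c -> x \in X c -> Q x = 0.
Proof. by case: hX => _ _ _ h _ hc hx; apply: (h c hc x hx). Qed.

Lemma Xperp a x w : 1 <= a -> x \in X (1 - a) -> w \in X a -> polar Q x w = 0.
Proof. by case: hX => _ _ _ _ h ha /(h a ha x); apply. Qed.

Lemma XperpI a x : 1 <= a -> (forall w, w \in X a -> polar Q x w = 0) -> x \in X (1 - a).
Proof. by case: hX => _ _ _ _ h ha H; apply/(h a ha x). Qed.

Lemma Xpolar c x y : 1 <= c -> x \in X c -> y \in X c -> polar Q x y = 0.
Proof.
move=> hc hx hy; rewrite /polar (Xiso hc hx) (Xiso hc hy) (Xiso hc (memvD hx hy)).
by rewrite !subr0.
Qed.

Lemma Xtop : exists a0 : int, forall a, a0 <= a -> X a = 0%VS.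
Proof. by case: hX. Qed.

Lemma adapted_gen (a0 : int) : (forall a, a0 <= a -> X a = 0%VS) ->
  forall d : nat, forall c : int, a0 <= c + d%:Z ->
  exists p : seq ('rV[k]_n * int),
  [/\ forall q, q \in p -> c <= q.2 /\ q.1 \in X q.2,
      free [seq q.1 | q <- p]
    & forall c', c <= c' -> (X c' <= <<[seq q.1 | q <- p & (c' <= q.2)%R]>>)%VS].
Proof.
move=> Htop; elim=> [|d IH] c hc.
  exists [::]; split => //; first exact: nil_free.
  by move=> c' cc'; rewrite Htop ?sub0v //; apply: le_trans cc'; rewrite addr0 in hc.
have [p' [H1 H2 H3]] : exists p' : seq ('rV[k]_n * int), _ := IH (c + 1) ltac:(move: hc; rewrite -addn1 PoszD; lia).
set U := (X c :\: X (c + 1))%VS.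
set b := vbasis U.
have bU v : v \in (b : seq _) -> v \in X c.
  by move=> /vbasis_mem /(subvP (diffvSl _ _)).
have mapb : [seq q.1 | q <- [seq (v, c) | v <- (b : seq _)]] = b.
  by rewrite -map_comp; elim: (b : seq _) => //= v s ->.
exists (p' ++ [seq (v, c) | v <- (b : seq _)]); split.
- move=> q; rewrite mem_cat => /orP[/H1 [h1 h2]|/mapP [v vb ->]] //=.
    by split => //; apply: le_trans h1; rewrite lerDl.
  by split => //; apply: bU.
- rewrite map_cat mapb cat_free H2 (basis_free (vbasisP _)) /=.
  apply/directv_addP/eqP; rewrite -subv0.
  apply: (subv_trans (capvS (_ : <<[seq q.1 | q <- p']>> <= X (c + 1))%VS (subvv <<b>>))).
    apply/span_subvP => v /mapP [q /H1 [h1 h2] ->].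
    exact: (subvP (Xmono h1)).
  by rewrite (span_basis (vbasisP _)) capvC capv_diff subvv.
- have sub c' : {subset [seq q.1 | q <- p' & c' <= q.2] <=
       [seq q.1 | q <- p' ++ [seq (v, c) | v <- (b : seq _)] & c' <= q.2]}.
    by move=> v; rewrite filter_cat map_cat mem_cat => ->.
  move=> c'; rewrite le_eqVlt => /orP [/eqP <-|].
  + have E : (X c <= U + X c :&: X (c + 1))%VS by rewrite /U addv_diff_cap subvv.
    apply: subv_trans E _; rewrite subv_add; apply/andP; split.
      have E2 : (U <= <<b>>)%VS by rewrite /b (span_basis (vbasisP U)) subvv.
      apply: subv_trans E2 _; apply: sub_span => v vb.
      apply/mapP; exists (v, c) => //; rewrite mem_filter lexx mem_cat /=.
      by apply/orP; right; apply/mapP; exists v.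
    apply: subv_trans (capvSr _ _) _.
    apply: subv_trans (H3 (c + 1) (lexx _)) _.
    apply: sub_span => v /mapP [q]; rewrite mem_filter => /andP [h1 h2] ->.
    apply/mapP; exists q => //; rewrite mem_filter mem_cat h2 andbT.
    by apply: le_trans h1; rewrite lerDl.
  + rewrite -lezD1 => h; apply: subv_trans (H3 c' h) _; exact: sub_span.
Qed.

Lemma adapted : exists p : seq ('rV[k]_n * int),
  [/\ forall q, q \in p -> 1 <= q.2 /\ q.1 \in X q.2,
      free [seq q.1 | q <- p]
    & forall c, 1 <= c -> (X c <= <<[seq q.1 | q <- p & (c <= q.2)%R]>>)%VS].
Proof.
have [a0 Ha0] := Xtop.
have h : a0 <= 1 + (`|a0 - 1|%N)%:Z.
  have [h|h] := lerP 0 (a0 - 1); first by rewrite gez0_abs //; lia.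
  lia.
by have [p [H1 H2 H3]] := adapted_gen Ha0 h; exists p; split.
Qed.
End Filt.
Lemma big_opt (R : nmodType) (T : finType) (F : option T -> R) :
  \sum_(j : option T) F j = F None + \sum_(t : T) F (Some t).
Proof.
by rewrite ![index_enum _]unlock [@Finite.enum in LHS]unlock/= big_cons big_map.
Qed.

Lemma alt_sum (R : pzRingType) m (c : 'I_m -> 'I_m -> R) :
  (forall i, c i i = 0) -> (forall i j, c i j + c j i = 0) ->
  \sum_j \sum_i c i j = 0.
Proof.
move=> h0 h1.
transitivity (\sum_(j < m) \sum_(i < m) ((if (i < j)%N then c i j else 0) + (if (j < i)%N then c i j else 0))).
  apply: eq_bigr => j _; apply: eq_bigr => i _.
  case: ltngtP => [_|_|e]; first by rewrite addr0.
    by rewrite add0r.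
  have -> : i = j by apply: val_inj.
  by rewrite h0 addr0.
rewrite (eq_bigr (fun j : 'I_m => \sum_(i < m) (if (i < j)%N then c i j else 0) + \sum_(i < m) (if (j < i)%N then c i j else 0))); last by move=> j _; rewrite big_split.
rewrite big_split /= [X in _ + X]exchange_big /= -big_split /=.
apply: big1 => j _; rewrite -big_split /=; apply: big1 => i _.
by case: ifP => _; rewrite ?h1 ?addr0.
Qed.

Lemma bil_expand (R : comPzRingType) n (M : 'M[R]_n) x y :
  bil M x y = \sum_j \sum_i x 0 i * M i j * y 0 j.
Proof.
rewrite /bil !mxE; apply: eq_bigr => j _; rewrite ?mxE mulr_suml.
by apply: eq_bigr => i _; rewrite ?mxE.
Qed.

Lemma mxDE (R : nmodType) m p (A B : 'M[R]_(m, p)) i j : (A + B) i j = A i j + B i j.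
Proof. by rewrite mxE. Qed.
Lemma mxNE (R : zmodType) m p (A : 'M[R]_(m, p)) i j : (- A) i j = - A i j.
Proof. by rewrite mxE. Qed.
Lemma mxBE (R : zmodType) m p (A B : 'M[R]_(m, p)) i j : (A - B) i j = A i j - B i j.
Proof. by rewrite mxDE mxNE. Qed.
Lemma mxZE (R : pzRingType) m p (a : R) (A : 'M[R]_(m, p)) i j : (a *: A) i j = a * A i j.
Proof. by rewrite mxE. Qed.

Lemma bilB_M (R : comPzRingType) n (M1 M2 : 'M[R]_n) x y :
  bil (M1 - M2) x y = bil M1 x y - bil M2 x y.
Proof. by rewrite /bil mulmxBr mulmxBl mxBE. Qed.
Lemma bilD_M (R : comPzRingType) n (M1 M2 : 'M[R]_n) x y :
  bil (M1 + M2) x y = bil M1 x y + bil M2 x y.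
Proof. by rewrite /bil mulmxDr mulmxDl mxDE. Qed.

Section Transfer.
Variables (k L : fieldType) (iota : {rmorphism k -> L}) (n : nat).

Lemma alt_transfer (M : 'M[k]_n) : (forall y, bil M y y = 0) ->
  forall x : 'rV[L]_n, bil (map_mx iota M) x x = 0.
Proof.
move=> h x.
have h0 i : M i i = 0 by rewrite -bil_delta h.
have h1 i j : M i j + M j i = 0.
  have := h ('e_i + 'e_j); rewrite !bilDl !bilDr !bil_delta h0 h0 add0r addr0.
  by [].
rewrite bil_expand; apply: alt_sum => [i|i j]; rewrite !mxE.
  by rewrite h0 rmorph0 mulr0 mul0r.
have -> : M j i = - M i j by apply/eqP; rewrite -addr_eq0 addrC h1.
rewrite rmorphN.
rewrite mulrN mulNr; ring.
Qed.
End Transfer.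
Section Path.
Variables (k L : fieldType) (iota : {rmorphism k -> L}) (n : nat).
Variables (Q : 'rV[k]_n -> k) (A : 'M[k]_n).
Hypothesis QA : forall y, Q y = bil A y y.
Variables (I : finType) (pi : I -> 'M[k]_n) (w : I -> int) (N : 'M[k]_n).
Hypothesis H1 : \sum_j pi j = 1%:M.
Hypothesis H2 : forall j l, pi j *m pi l = if j == l then pi j else 0.
Hypothesis H3 : forall j y, w j != 0 -> Q (y *m pi j) = 0.
Hypothesis H4 : forall j l y z, w j + w l != 0 -> polar Q (y *m pi j) (z *m pi l) = 0.
Hypothesis H5 : forall j l, ~~ (w j + 2 <= w l) -> pi j *m N *m pi l = 0.
Hypothesis HN1 : forall y, Q (y *m (1%:M + N)) = Q y.
Hypothesis HN2 : (1%:M + N) \in unitmx.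

Local Notation AL := (map_mx iota A).
Definition QL (x : 'rV[L]_n) := bil AL x x.
Definition BL (x y : 'rV[L]_n) := bil AL x y + bil AL y x.

Lemma QLD x y : QL (x + y) = QL x + QL y + BL x y.
Proof. rewrite /QL /BL !bilDl !bilDr; ring. Qed.
Lemma QLZ a x : QL (a *: x) = a ^+ 2 * QL x.
Proof. by rewrite /QL bilZl bilZr expr2 mulrA. Qed.
Lemma BLZl a x y : BL (a *: x) y = a * BL x y.
Proof. by rewrite /BL bilZl bilZr mulrDr. Qed.
Lemma BLZr a x y : BL x (a *: y) = a * BL x y.
Proof. by rewrite /BL bilZl bilZr mulrDr. Qed.
Lemma BL_sumr (r : seq I) (F : I -> 'rV_n) x :
  BL x (\sum_(j <- r) F j) = \sum_(j <- r) BL x (F j).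
Proof. by rewrite /BL bil_sumr bil_suml -big_split. Qed.

Lemma QL_sum_scale (r : seq I) (v : I -> 'rV[L]_n) (c : I -> L) :
  (forall j, c j ^+ 2 * QL (v j) = QL (v j)) ->
  (forall j l, c j * c l * BL (v j) (v l) = BL (v j) (v l)) ->
  QL (\sum_(j <- r) c j *: v j) = QL (\sum_(j <- r) v j).
Proof.
move=> h1 h2; elim: r => [|j r IH]; first by rewrite !big_nil.
rewrite !big_cons !QLD QLZ h1 IH BLZl !BL_sumr mulr_sumr; congr (_ + _).
apply: eq_bigr => l _; by rewrite BLZr mulrA h2.
Qed.

Lemma polarA y z : polar Q y z = bil A y z + bil A z y.
Proof. rewrite /polar !QA !bilDl !bilDr; ring. Qed.

Lemma QL_bil_map (M : 'M[k]_n) x : QL (x *m map_mx iota M) = bil (map_mx iota (M *m A *m M^T)) x x.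
Proof. by rewrite /QL bilM bilMr !map_mxM map_trmx. Qed.

Lemma pres_transfer (T : 'M[k]_n) : (forall y, Q (y *m T) = Q y) ->
  forall x, QL (x *m map_mx iota T) = QL x.
Proof.
move=> h x; apply/eqP; rewrite -subr_eq0 QL_bil_map /QL -bilB_M -map_mxB.
apply/eqP; apply: alt_transfer => y.
by rewrite bilB_M -bilMr -bilM -!QA h subrr.
Qed.

Definition Lam (s : L) : 'M[L]_n := \sum_j (s ^ w j) *: map_mx iota (pi j).

Lemma map_mx_sum (J : Type) (r : seq J) (P : pred J) (F : J -> 'M[k]_n) :
  map_mx iota (\sum_(i <- r | P i) F i) = \sum_(i <- r | P i) map_mx iota (F i).
Proof. by elim/big_rec2: _ => [|i x y _ <-]; rewrite ?map_mx0 ?map_mxD. Qed.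

Lemma QL_Lam s x : s != 0 -> QL (x *m Lam s) = QL x.
Proof.
move=> s0.
have ex : x = \sum_j x *m map_mx iota (pi j).
  by rewrite -mulmx_sumr -map_mx_sum H1 map_mx1 mulmx1.
rewrite [in RHS]ex /Lam mulmx_sumr (eq_bigr (fun j => s ^ w j *: (x *m map_mx iota (pi j)))); last first.
  by move=> j _; rewrite scalemxAr.
apply: QL_sum_scale => [j|j l].
  have [/eqP ->|wj] := boolP (w j == 0); first by rewrite expr0z expr1n mul1r.
  rewrite QL_bil_map alt_transfer ?mulr0 // => y.
  by rewrite -bilMr -bilM -QA H3.
have [/eqP e|wjl] := boolP (w j + w l == 0).
  by rewrite -expfzDr // e expr0z mul1r.
have -> : BL (x *m map_mx iota (pi j)) (x *m map_mx iota (pi l)) =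
   bil (map_mx iota (pi j *m A *m (pi l)^T + pi l *m A *m (pi j)^T)) x x.
  by rewrite /BL map_mxD bilD_M !bilM !bilMr !map_mxM !map_trmx.
rewrite alt_transfer ?mulr0 // => y.
by rewrite bilD_M -!bilMr -!bilM -polarA H4.
Qed.

Lemma Lam_inv s : s != 0 -> Lam s^-1 *m Lam s = 1%:M.
Proof.
move=> s0; rewrite /Lam mulmx_suml.
rewrite (eq_bigr (fun j => map_mx iota (pi j))); last first.
  move=> j _; rewrite mulmx_sumr (bigD1 j) //= big1 ?addr0; last first.
    by move=> l /negPf jl; rewrite -scalemxAl -scalemxAr -map_mxM H2 eq_sym jl map_mx0 !scaler0.
  rewrite -scalemxAl -scalemxAr -map_mxM H2 eqxx scalerA exprz_inv -expfzDr ?invr_eq0 //.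
  by rewrite addNr expr0z scale1r.
by rewrite -map_mx_sum H1 map_mx1.
Qed.

Lemma Lam_unit s : s != 0 -> Lam s \in unitmx.
Proof. by move=> s0; have [_ ->] := mulmx1_unit (Lam_inv s0). Qed.

Definition Pth (s : L) : 'M[L]_n := 1%:M + \sum_j \sum_l
  (if w j + 2 <= w l then s ^+ `|w l - w j|%N else 0) *: map_mx iota (pi j *m N *m pi l).

Lemma Pth_conj s : s != 0 -> Pth s = Lam s^-1 *m map_mx iota (1%:M + N) *m Lam s.
Proof.
move=> s0; rewrite map_mxD map_mx1 mulmxDr mulmxDl mulmx1 Lam_inv //; congr (_ + _).
rewrite /Lam mulmx_suml mulmx_suml; apply: eq_bigr => j _.
rewrite mulmx_sumr; apply: eq_bigr => l _.
rewrite -scalemxAl -scalemxAl -scalemxAr scalerA -!map_mxM.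
case: ifP => c.
  rewrite exprz_inv -expfzDr // (_ : - w j + w l = (`|w l - w j|%N)%:Z); last first.
    by rewrite gez0_abs; [rewrite addrC | rewrite subr_ge0; apply: le_trans c; rewrite lerDl].
  by [].
by rewrite H5 ?c // map_mx0 !scaler0.
Qed.

Lemma Pth0 : Pth 0 = 1%:M.
Proof.
rewrite /Pth big1 ?addr0 // => j _; apply: big1 => l _.
case: ifP => c; last by rewrite scale0r.
rewrite expr0n (_ : (`|w l - w j|%N == 0%N) = false) ?scale0r //.
apply/negbTE; rewrite -lt0n -(@ltr0n int); rewrite natz gez0_abs; last first.
  by rewrite subr_ge0; apply: le_trans c; rewrite lerDl.
by rewrite subr_gt0; apply: lt_le_trans c; rewrite ltrDl.
Qed.

Lemma Pth1 : Pth 1 = map_mx iota (1%:M + N).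
Proof.
have L1 : Lam 1 = 1%:M.
  rewrite /Lam (eq_bigr (fun j => map_mx iota (pi j))); last by move=> j _; rewrite exp1rz scale1r.
  by rewrite -map_mx_sum H1 map_mx1.
by rewrite Pth_conj ?oner_eq0 // invr1 L1 mul1mx mulmx1.
Qed.

Lemma Pth_O s : Ogroup QL (Pth s).
Proof.
have [->|s0] := eqVneq s 0.
  by rewrite Pth0; split; [exact: unitmx1 | move=> x; rewrite mulmx1].
rewrite Pth_conj //; split.
  rewrite !unitmx_mul Lam_unit ?invr_eq0 // Lam_unit // andbT.
  by rewrite map_unitmx.
move=> x; rewrite !mulmxA QL_Lam // (pres_transfer HN1) QL_Lam ?invr_eq0 //.
Qed.

Lemma Pth_poly f : polyfun f -> exists p : {poly L}, forall s, f (Pth s) = p.[s].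
Proof.
elim=> [c|i j|f1 f2 _ [p1 e1] _ [p2 e2]|f1 f2 _ [p1 e1] _ [p2 e2]].
- by exists c%:P => s; rewrite hornerC.
- exists (((1%:M : 'M[L]_n) i j)%:P + \sum_j' \sum_l
     ((if w j' + 2 <= w l then 'X^(`|w l - w j'|%N) else 0) * (map_mx iota (pi j' *m N *m pi l) i j)%:P)).
  move=> s; rewrite hornerD hornerC /Pth mxDE summxE horner_sum; congr (_ + _).
  apply: eq_bigr => j' _; rewrite summxE horner_sum; apply: eq_bigr => l _.
  rewrite mxZE hornerM hornerC; congr (_ * _).
  by case: ifP => _; rewrite ?hornerXn ?horner0.
- by exists (p1 + p2) => s; rewrite hornerD e1 e2.
- by exists (p1 * p2) => s; rewrite hornerM e1 e2.
Qed.

Hypothesis Lclosed : GRing.closed_field_axiom L.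

Lemma Pth_conn : Zconnected (fun T => exists s, T = Pth s).
Proof.
move=> Z1 Z2 [S1 [S1p S1e]] [S2 [S2p S2e]] cov _.
case: (classic (forall T, (exists s, T = Pth s) -> Z1 T)) => [h|h]; first by left.
case: (classic (forall T, (exists s, T = Pth s) -> Z2 T)) => [h'|h']; first by right.
exfalso.
have [s1 ns1] : exists s, ~ Z1 (Pth s).
  apply: NNPP => hn; apply: h => T [s ->]; apply: NNPP => z; apply: hn; by exists s.
have [s2 ns2] : exists s, ~ Z2 (Pth s).
  apply: NNPP => hn; apply: h' => T [s ->]; apply: NNPP => z; apply: hn; by exists s.
have [f1 [f1S f1n]] : exists f, S1 f /\ f (Pth s1) <> 0.
  apply: NNPP => hn; apply: ns1; apply/S1e => f Sf; apply: NNPP => nz; apply: hn; by exists f.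
have [f2 [f2S f2n]] : exists f, S2 f /\ f (Pth s2) <> 0.
  apply: NNPP => hn; apply: ns2; apply/S2e => f Sf; apply: NNPP => nz; apply: hn; by exists f.
have [p1 e1] := Pth_poly (S1p _ f1S).
have [p2 e2] := Pth_poly (S2p _ f2S).
have p1n : p1 != 0 by apply/eqP => p0; apply: f1n; rewrite e1 p0 horner0.
have p2n : p2 != 0 by apply/eqP => p0; apply: f2n; rewrite e2 p0 horner0.
have [s hs] := PreClosedField.closed_nonrootP Lclosed (p1 * p2) (mulf_neq0 p1n p2n).
move: hs; rewrite /root hornerM mulf_eq0 negb_or => /andP [/eqP n1 /eqP n2].
have [z1|z2] := cov (Pth s) (ex_intro _ s erefl).
  by apply: n1; rewrite -e1; apply: (proj1 (S1e _) z1).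
by apply: n2; rewrite -e2; apply: (proj1 (S2e _) z2).
Qed.

Lemma path_main (Q' : 'rV[L]_n -> L) : (forall x, Q' x = QL x) ->
  identity_component (Ogroup Q') (map_mx iota (1%:M + N)).
Proof.
move=> hQ; exists (fun T => exists s, T = Pth s); split.
- move=> T [s ->]; have [u h] := Pth_O s; split => // x; by rewrite !hQ h.
- by exists 0; rewrite Pth0.
- exact: Pth_conn.
- by exists 1; rewrite Pth1.
Qed.
End Path.
Section Grade.
Variables (k : fieldType) (n : nat) (Q : 'rV[k]_n -> k) (X : int -> {vspace 'rV[k]_n}).
Hypothesis hq : is_quadratic_form Q.
Hypothesis hX : Q_filtration Q X.
Hypothesis hnd : Q_nondegenerate Q.

Local Notation G := (Gmat Q).
Local Notation A := (Amat Q).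

Lemma GT : G^T = G.
Proof. by rewrite /Gmat linearD /= trmxK addrC. Qed.

Lemma rad0 x : (forall y, polar Q x y = 0) -> Q x = 0 -> x = 0.
Proof.
move=> hx qx; apply: hnd; first exact: hx.
  by move=> y; rewrite (polar0l hq).
by rewrite qx (Q0 hq).
Qed.

Variable p : seq ('rV[k]_n * int).
Hypothesis Hp1 : forall q, q \in p -> 1 <= q.2 /\ q.1 \in X q.2.
Hypothesis Hp2 : free [seq q.1 | q <- p].
Hypothesis Hp3 : forall c, 1 <= c -> (X c <= <<[seq q.1 | q <- p & (c <= q.2)%R]>>)%VS.

Local Notation es := [seq q.1 | q <- p].
Local Notation r := (size es).
Definition aw (i : nat) : int := (nth (0, 0) p i).2.

Lemma es_nth (i : nat) : (i < size p)%N -> es`_i = (nth (0, 0) p i).1.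
Proof. by move=> h; rewrite (nth_map (0, 0)). Qed.

Lemma Fe (i : 'I_r) : 1 <= aw i /\ es`_i \in X (aw i).
Proof.
have hi : (i < size p)%N by rewrite -(size_map fst); exact: ltn_ord.
by rewrite es_nth //; apply: Hp1; apply: mem_nth.
Qed.

Lemma FeX1 (i : 'I_r) : es`_i \in X 1.
Proof. by have [h1 h2] := Fe i; apply: (subvP (Xmono hX h1)). Qed.

Lemma Fvan c x y : 1 <= c -> x \in X c ->
  (forall i : 'I_r, c <= aw i -> polar Q es`_i y = 0) -> polar Q x y = 0.
Proof.
move=> hc hx hv.
set S := [seq q.1 | q <- p & (c <= q.2)%R].
have xS : x \in <<S>>%VS by apply: (subvP (Hp3 hc)).
rewrite (@coord_span _ _ _ (in_tuple S) x xS) (polar_suml hq); apply: big1 => t _.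
rewrite (polarZl hq).
have : S`_t \in S by apply: mem_nth; exact: ltn_ord.
case/mapP => q; rewrite mem_filter => /andP [cq qp] ->.
have hi : (index q p < r)%N by rewrite size_map index_mem.
have hi' : (index q p < size p)%N by rewrite index_mem.
have := hv (Ordinal hi); rewrite /aw /= (es_nth hi') nth_index //.
by move=> -> //; rewrite mulr0.
Qed.

Lemma mx_ext m (M M' : 'M[k]_(n, m)) : (forall x : 'rV[k]_n, x *m M = x *m M') -> M = M'.
Proof. by move=> h; apply/row_matrixP => i; rewrite !rowE h. Qed.

Lemma sum_delta (m : nat) (j : 'I_m) (c : 'I_m -> k) (v : 'I_m -> 'rV[k]_n) :
  \sum_(i < m) (c i * (i == j)%:R) *: v i = c j *: v j.
Proof.
rewrite (bigD1 j) //= eqxx mulr1 big1 ?addr0 // => i /negPf ->.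
by rewrite mulr0 scale0r.
Qed.
Lemma sum_delta' (m : nat) (j : 'I_m) (c : 'I_m -> k) :
  \sum_(i < m) (c i * (i == j)%:R) = c j.
Proof.
rewrite (bigD1 j) //= eqxx mulr1 big1 ?addr0 // => i /negPf ->.
by rewrite mulr0.
Qed.

Definition Em : 'M[k]_(r, n) := \matrix_(i < r) es`_i.
Lemma rowEm i : row i Em = es`_i. Proof. by rewrite rowK. Qed.

Lemma vEm (v : 'rV[k]_r) : v *m Em = \sum_i v 0 i *: es`_i.
Proof. by rewrite mulmx_sum_row; apply: eq_bigr => i _; rewrite rowEm. Qed.

Lemma vEmX1 (v : 'rV[k]_r) : v *m Em \in X 1.
Proof. by rewrite vEm; apply: memv_suml => i _; apply: memvZ; apply: FeX1. Qed.

Lemma EG_free : row_free (Em *m G).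
Proof.
rewrite -kermx_eq0; apply/rowV0P => v /sub_kermxP hv.
set x := v *m Em.
have hr y : polar Q x y = 0.
  by rewrite (polar_bil hq) /bil /x -(mulmxA v) hv !mul0mx mxE.
have x0 : x = 0 by apply: rad0 hr (Xiso hX _ (vEmX1 v)).
have /(@freeP _ _ _ (in_tuple es)) hf := Hp2.
apply/rowP => i; rewrite mxE; apply: (hf (fun i => v 0 i)).
by rewrite -vEm.
Qed.

Lemma GEt_full : row_full (G *m Em^T).
Proof.
rewrite /row_full -mxrank_tr trmx_mul trmxK GT.
by have := EG_free; rewrite /row_free.
Qed.

Lemma Dex : exists B : 'M[k]_(r, n), B *m (G *m Em^T) == 1%:M.
Proof. by have /row_fullP [B hB] := GEt_full; exists B; rewrite hB. Qed.
Definition Dm := xchoose Dex.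
Lemma hD : Dm *m (G *m Em^T) = 1%:M.
Proof. exact: eqP (xchooseP Dex). Qed.

Definition Um := Dm *m A^T *m Dm^T.
Definition uv (j : 'I_r) := row j Um *m Em.
Definition fv (j : 'I_r) := row j Dm - uv j.

Lemma uvX1 j : uv j \in X 1. Proof. exact: vEmX1. Qed.

Lemma pEE (i j : 'I_r) : polar Q es`_i es`_j = 0.
Proof. exact: (Xpolar hX (lexx _) (FeX1 i) (FeX1 j)). Qed.

Lemma pED (i j : 'I_r) : polar Q es`_i (row j Dm) = (i == j)%:R.
Proof.
have := congr1 (fun M : 'M[k]_r => M j i) hD.
rewrite mulmxA bil_entry rowEm -(polar_bil hq) (polarC Q) => ->.
by rewrite mxE eq_sym.
Qed.

Lemma pEU (i j : 'I_r) : polar Q es`_i (uv j) = 0.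
Proof. exact: (Xpolar hX (lexx _) (FeX1 i) (uvX1 j)). Qed.

Lemma pDU (i j : 'I_r) : polar Q (row i Dm) (uv j) = Um j i.
Proof.
rewrite /uv vEm (polar_sumr hq).
rewrite (eq_bigr (fun l => row j Um 0 l * (l == i)%:R)); last first.
  by move=> l _; rewrite (polarZr hq) (polarC Q) pED.
by rewrite sum_delta' mxE.
Qed.

Lemma UmE (i j : 'I_r) : Um i j = bil A (row j Dm) (row i Dm).
Proof. by rewrite /Um bil_entry bilT. Qed.

Lemma polarA' y z : polar Q y z = bil A y z + bil A z y.
Proof. by rewrite (polar_bil hq) /Gmat bilD_M bilT. Qed.

Lemma pEF (i j : 'I_r) : polar Q es`_i (fv j) = (i == j)%:R.
Proof. by rewrite /fv (polarBr hq) pED pEU subr0. Qed.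

Lemma pFE (i j : 'I_r) : polar Q (fv j) es`_i = (i == j)%:R.
Proof. by rewrite (polarC Q) pEF. Qed.

Lemma pFF (i j : 'I_r) : polar Q (fv i) (fv j) = 0.
Proof.
rewrite /fv (polarBl hq) !(polarBr hq) pDU [polar Q (uv i) (row j Dm)](polarC Q) pDU.
rewrite (Xpolar hX (lexx _) (uvX1 i) (uvX1 j)) subr0 !UmE polarA'; ring.
Qed.

Lemma Qf (j : 'I_r) : Q (fv j) = 0.
Proof.
rewrite /fv (QD Q) (QN hq) (Xiso hX (lexx _) (uvX1 j)) (polarNr hq) pDU UmE.
by rewrite (Q_bil hq) addr0 subrr.
Qed.

Definition x0 x := x - \sum_(i < r) polar Q x (fv i) *: es`_i - \sum_(i < r) polar Q x es`_i *: fv i.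

Lemma p0F x (l : 'I_r) : polar Q (x0 x) (fv l) = 0.
Proof.
rewrite /x0 !(polarBl hq) !(polar_suml hq).
rewrite (eq_bigr (fun i : 'I_r => polar Q x (fv i) * (i == l)%:R)); last first.
  by move=> i _; rewrite (polarZl hq) pEF.
rewrite sum_delta' big1 ?subr0 ?subrr // => i _.
by rewrite (polarZl hq) pFF mulr0.
Qed.

Lemma p0E x (l : 'I_r) : polar Q (x0 x) es`_l = 0.
Proof.
rewrite /x0 !(polarBl hq) !(polar_suml hq).
rewrite [X in _ - X - _]big1 => [|i _]; last by rewrite (polarZl hq) pEE mulr0.
rewrite (eq_bigr (fun i : 'I_r => polar Q x es`_i * (i == l)%:R)); last first.
  by move=> i _; rewrite (polarZl hq) pFE eq_sym.
by rewrite sum_delta' subr0 subrr.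
Qed.

Lemma rep1 y : y \in X 1 -> y = \sum_(i < r) polar Q y (fv i) *: es`_i.
Proof.
move=> yX; apply/eqP; rewrite -subr_eq0; apply/eqP.
set z := y - _.
have zX : z \in X 1.
  by apply: memvB => //; apply: memv_suml => i _; apply: memvZ; apply: FeX1.
have zs : z \in <<es>>%VS.
  apply: (subvP (sub_span _)) (subvP (Hp3 (lexx _)) _ zX).
  by move=> v /mapP [q]; rewrite mem_filter => /andP [_ qp] ->; apply: map_f.
have hz j : polar Q z (fv j) = 0.
  rewrite /z (polarBl hq) (polar_suml hq).
  rewrite (eq_bigr (fun i : 'I_r => polar Q y (fv i) * (i == j)%:R)); last first.
    by move=> i _; rewrite (polarZl hq) pEF.
  by rewrite sum_delta' subrr.
have hc i : coord (in_tuple es) i z = 0.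
  have := hz i; rewrite {1}(@coord_span _ _ _ (in_tuple es) z zs) (polar_suml hq).
  rewrite (eq_bigr (fun l : 'I_r => coord (in_tuple es) l z * (l == i)%:R)); last first.
    by move=> l _; rewrite (polarZl hq) pEF.
  by rewrite sum_delta'.
rewrite (@coord_span _ _ _ (in_tuple es) z zs) big1 // => i _.
by rewrite hc scale0r.
Qed.

Definition mkP (u v : 'rV[k]_n) : 'M[k]_n := G *m u^T *m v.
Lemma mulP x u v : x *m mkP u v = polar Q x u *: v.
Proof. by rewrite /mkP !mulmxA (polar_bil hq) -mul_scalar_mx -mx11_scalar. Qed.

Definition pj (j : option ('I_r + 'I_r)) : 'M[k]_n :=
  match j with
  | Some (inl i) => mkP (fv i) es`_i
  | Some (inr i) => mkP es`_i (fv i)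
  | None => 1%:M - \sum_(i < r) mkP (fv i) es`_i - \sum_(i < r) mkP es`_i (fv i)
  end.
Definition wj (j : option ('I_r + 'I_r)) : int :=
  match j with Some (inl i) => aw i | Some (inr i) => - aw i | None => 0 end.

Lemma mulpN x : x *m pj None = x0 x.
Proof.
rewrite /= !mulmxBr mulmx1 !mulmx_sumr /x0.
by congr (_ - _ - _); apply: eq_bigr => i _; rewrite mulP.
Qed.

Lemma x0_e c (i : 'I_r) : x0 (c *: es`_i) = 0.
Proof.
rewrite /x0 [X in _ - _ - X]big1 => [|m _]; last first.
  by rewrite (polarZl hq) pEE mulr0 scale0r.
rewrite (eq_bigr (fun m : 'I_r => (c * (m == i)%:R) *: es`_m)); last first.
  by move=> m _; rewrite (polarZl hq) pEF eq_sym.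
by rewrite sum_delta subrr subr0.
Qed.

Lemma x0_f c (i : 'I_r) : x0 (c *: fv i) = 0.
Proof.
rewrite /x0 [X in _ - X - _]big1 => [|m _]; last first.
  by rewrite (polarZl hq) pFF mulr0 scale0r.
rewrite (eq_bigr (fun m : 'I_r => (c * (m == i)%:R) *: fv m)); last first.
  by move=> m _; rewrite (polarZl hq) pFE.
by rewrite sum_delta subr0 subrr.
Qed.

Lemma x0_x0 x : x0 (x0 x) = x0 x.
Proof.
rewrite {1}/x0 !big1 ?subr0 // => i _.
  by rewrite p0E scale0r.
by rewrite p0F scale0r.
Qed.

Lemma pjH1 : \sum_j pj j = 1%:M.
Proof. by rewrite big_opt big_sumType /= [X in _ + X]addrC addrA subrK subrK. Qed.

Lemma pjH2 j l : pj j *m pj l = if j == l then pj j else 0.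
Proof.
apply: mx_ext => x; rewrite mulmxA.
have eS1 (a b : 'I_r) : (Some (inl a) == Some (inl b) :> option ('I_r + 'I_r)) = (a == b) by [].
have eS2 (a b : 'I_r) : (Some (inr a) == Some (inr b) :> option ('I_r + 'I_r)) = (a == b) by [].
case: j => [[i|i]|]; case: l => [[m|m]|]; rewrite ?eS1 ?eS2 /= ?mulpN ?mulmx0.
- rewrite !mulP (polarZl hq) pEF; have [->|im] := eqVneq i m; first by rewrite ?eqxx mulP mulr1.
  by rewrite mulmx0 mulr0 scale0r.
- by rewrite !mulP (polarZl hq) pEE mulr0 scale0r.
- by rewrite mulP x0_e.
- by rewrite !mulP (polarZl hq) pFF mulr0 scale0r.
- rewrite !mulP (polarZl hq) pFE; have [->|im] := eqVneq i m; first by rewrite ?eqxx mulP mulr1.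
  by rewrite mulmx0 mulr0 scale0r.
- by rewrite mulP x0_f.
- by rewrite mulP p0F scale0r.
- by rewrite mulP p0E scale0r.
- by rewrite x0_x0.
Qed.

Lemma pjH3 j y : wj j != 0 -> Q (y *m pj j) = 0.
Proof.
case: j => [[i|i]|] /=; last by move/eqP.
- by rewrite mulP (QZ hq) (Xiso hX (lexx _) (FeX1 i)) mulr0.
- by rewrite mulP (QZ hq) Qf mulr0.
Qed.

Lemma pjH4 j l y z : wj j + wj l != 0 -> polar Q (y *m pj j) (z *m pj l) = 0.
Proof.
case: j => [[i|i]|]; case: l => [[m|m]|] /=; rewrite ?mulpN ?mulP.
- by rewrite (polarZl hq) (polarZr hq) pEE !mulr0.
- rewrite (polarZl hq) (polarZr hq) pEF; have [->|im] := eqVneq i m.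
    by rewrite subrr eqxx.
  by rewrite !mulr0.
- by rewrite (polarZl hq) (polarC Q es`_i) p0E mulr0.
- rewrite (polarZl hq) (polarZr hq) pFE; have [->|im] := eqVneq i m.
    by rewrite addrC subrr eqxx.
  by rewrite !mulr0.
- by rewrite (polarZl hq) (polarZr hq) pFF !mulr0.
- by rewrite (polarZl hq) (polarC Q (fv i)) p0F mulr0.
- by rewrite (polarZr hq) p0E mulr0.
- by rewrite (polarZr hq) p0F mulr0.
- by move/eqP.
Qed.

Lemma fvX (i : 'I_r) : fv i \in X (- aw i).
Proof.
have [h1 _] := Fe i.
have -> : - aw i = 1 - (aw i + 1) by ring.
apply: (XperpI hX); first by rewrite lerDr; apply: le_trans h1.
move=> v vX; rewrite (polarC Q); apply: (Fvan (c := aw i + 1)) vX _ => //.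
  by rewrite lerDr; apply: le_trans h1.
move=> l hl; rewrite pEF; have [e|//] := eqVneq l i.
by exfalso; move: hl; rewrite e; lia.
Qed.

Lemma x0X x : x0 x \in X 0.
Proof.
rewrite -(subrr (1 : int)); apply: (XperpI hX) => // v vX.
rewrite (polarC Q); apply: (Fvan (c := 1)) vX _ => // l _.
by rewrite (polarC Q) p0E.
Qed.

Lemma pjH5 j y : y *m pj j \in X (wj j).
Proof.
case: j => [[i|i]|] /=; rewrite ?mulpN ?mulP.
- by apply: memvZ; have [] := Fe i.
- by apply: memvZ; apply: fvX.
- exact: x0X.
Qed.

Lemma pjH6 l c y : y \in X c -> wj l < c -> y *m pj l = 0.
Proof.
move=> yX; case: l => [[i|i]|] /= hc; rewrite ?mulpN ?mulP.
- have [h1 _] := Fe i.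
  rewrite (Fvan (c := c)) ?scale0r //; first by apply: le_trans (ltW hc).
  move=> m hm; rewrite pEF; have [e|//] := eqVneq m i.
  by exfalso; move: hm hc; rewrite e; lia.
- have [h1 h2] := Fe i.
  have yX' : y \in X (1 - aw i).
    by apply: (subvP (Xmono hX _)) yX; rewrite -lezD1 addrC in hc.
  by rewrite (Xperp hX h1 yX' h2) scale0r.
- have yX1 : y \in X 1 by apply: (subvP (Xmono hX _)) yX; rewrite -lezD1 add0r in hc.
  rewrite /x0 [X in _ - _ - X]big1 => [|i _]; last by rewrite (Xpolar hX (lexx _) yX1 (FeX1 i)) scale0r.
  by rewrite subr0 -rep1 // subrr.
Qed.
End Grade.

Lemma grading (k : fieldType) (n : nat) (Q : 'rV[k]_n -> k) (X : int -> {vspace 'rV[k]_n}) :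
  is_quadratic_form Q -> Q_filtration Q X -> Q_nondegenerate Q ->
  exists (I : finType) (pi : I -> 'M[k]_n) (w : I -> int),
  [/\ \sum_j pi j = 1%:M,
      forall j l, pi j *m pi l = if j == l then pi j else 0,
      forall j y, w j != 0 -> Q (y *m pi j) = 0,
      forall j l y z, w j + w l != 0 -> polar Q (y *m pi j) (z *m pi l) = 0
    & (forall j y, y *m pi j \in X (w j)) /\
      (forall l c y, y \in X c -> w l < c -> y *m pi l = 0)].
Proof.
move=> hq hX hnd; have [p [H1 H2 H3]] := adapted hX.
exists (option ('I_(size [seq q.1 | q <- p]) + 'I_(size [seq q.1 | q <- p]))%type).
exists (pj hq hX hnd H1 H2), (wj (p := p)); split.
- exact: pjH1.
- exact: pjH2.
- exact: pjH3.
- exact: pjH4.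
- split; [exact: pjH5 | exact: pjH6].
Qed.

Lemma unit_nil (R : pzRingType) (x : R) m : x ^+ m = 0 ->
  (1 + x) * \sum_(i < m) (- x) ^+ i = 1.
Proof.
move=> h; have := subrX1 (- x) m; rewrite exprNn h mulr0 sub0r => e.
have -> : 1 + x = - (- x - 1) by rewrite opprB opprK addrC.
by rewrite mulNr -e opprK.
Qed.

Lemma Qext_bil (k L : fieldType) (iota : {rmorphism k -> L}) (n : nat)
  (Q : 'rV[k]_n -> k) x : Qext iota Q x = bil (map_mx iota (Amat Q)) x x.
Proof.
rewrite bil_expand exchange_big /Qext -big_split /=; apply: eq_bigr => i _.
rewrite [RHS](bigD1 i) //= !mxE eqxx; congr (_ + _); first by rewrite expr2; ring.
rewrite big_mkcond [RHS]big_mkcond; apply: eq_bigr => j _ /=.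
have [->|ij] := eqVneq j i; first by rewrite ltnn.
rewrite !mxE eq_sym (negPf ij); case: ifP => _; last by rewrite rmorph0 mulr0 mul0r.
by rewrite mulrAC.
Qed.

Lemma mx_ext' (k : fieldType) n m (M M' : 'M[k]_(n, m)) :
  (forall x : 'rV[k]_n, x *m M = x *m M') -> M = M'.
Proof. by move=> h; apply/row_matrixP => i; rewrite !rowE h. Qed.

Theorem mainTheorem4 (k : fieldType) (n : nat) (Q : 'rV[k]_n -> k)
  (X : int -> {vspace 'rV[k]_n}) :
  (finite_field k \/ GRing.closed_field_axiom k) ->
  is_quadratic_form Q -> Q_nondegenerate Q -> Q_filtration Q X ->
  forall N : 'M[k]_n, E2 Q X N -> SO_Q Q (1%:M + N).
Proof.
move=> _ hq hnd hX N [[[m hnil] htm] hE].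
have HN1 y : Q (y *m (1%:M + N)) = Q y.
  by rewrite mulmxDr mulmx1 (QD Q) htm subrK.
have HN2 : (1%:M + N) \in unitmx.
  have h := unit_nil hnil.
  by have [] := mulmx1_unit h.
have [I [pi [w [H1 H2 H3 H4 [H5' H6']]]]] := grading hq hX hnd.
have H5 j l : ~~ (w j + 2 <= w l) -> pi j *m N *m pi l = 0.
  move=> hjl; apply: mx_ext' => x; rewrite mulmx0 !mulmxA.
  apply: (H6' l (w j + 2)); first exact: hE (H5' j x).
  by rewrite ltNge.
have QA y : Q y = bil (Amat Q) y y by exact: Q_bil.
split.
- move=> hk.
  have := path_main (iota := idfun) QA H1 H2 H3 H4 H5 HN1 HN2 hk (Q' := Q).
  rewrite map_mx_id //; apply => x.
  by rewrite /QL map_mx_id // QA.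
- move=> _; split; first by split.
  move=> L iota [hL _].
  apply: (path_main QA H1 H2 H3 H4 H5 HN1 HN2 hL) => x.
  by rewrite Qext_bil.
Qed.
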